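(* For $n\ge2$ and variables $x_1,\dots,x_{n-1}$, $t_1,\dots,t_{n-1}$, $z_1,\dots,z_n$, define $$P_n=\sum_{\sigma\in S_n}(-1)^{\ell(\sigma)}\prod_{m=1}^{n-1}\Big(\prod_{k=1}^{m}(1+t_mz_{\sigma(k)}x_m)\prod_{k=m+1}^{n}(1-z_{\sigma(k)}x_m)\Big).$$ Then $$P_n=x_1\cdots x_{n-1}\prod_{i=1}^{n-1}(1+t_i)\prod_{1\le i<j\le n-1}(x_i+t_jx_j)\prod_{1\le i<j\le n}(z_i-z_j).$$
   Context: $\ell(\sigma)$ denotes the length (number of inversions) of $\sigma\in S_n$. *)

(* Defs.v *)
From HB Require Import structures.
From mathcomp Require Import all_boot all_order all_algebra all_fingroup.
Set Implicit Arguments. Unset Strict Implicit. Unset Printing Implicit Defensive.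

Definition perm_length (n : nat) (s : 'S_n) : nat :=
  #|[set p : 'I_n * 'I_n | (p.1 < p.2) && (s p.2 < s p.1)]|.

(* Action of s : 'S_n on 1-based indices {1,...,n} (identity outside). *)
Definition perm_nat (n : nat) (s : 'S_n) (k : nat) : nat :=
  if @insub nat (fun i => i < n) 'I_n k.-1 is Some i then (val (s i)).+1 else k.

(* Main.v *)
Require Import Defs.
From HB Require Import structures.
From mathcomp Require Import all_boot all_order all_algebra all_fingroup.
From mathcomp Require Import ring zify.
Import GRing.Theory.
Import Num.Theory Order.TTheory.
Local Open Scope ring_scope.


Lemma perm_length_sum n (s : 'S_n) :
  perm_length s = (\sum_(i < n) \sum_(j < n | (i < j)%N) ((s j < s i)%N : nat))%N.
Proof.
rewrite /perm_length -sum1_card big_mkcond /=.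
under [RHS]eq_bigr do rewrite big_mkcond /=.
rewrite pair_bigA /=; apply: eq_bigr => -[i j] _.
by rewrite inE /=; case: (i < j)%N; case: (s j < s i)%N.
Qed.

Lemma sign_len (R : pzRingType) n (s : 'S_n) :
  (-1) ^+ perm_length s = (-1) ^+ s :> R.
Proof.
pose a : 'rV[int]_n := \row_j (j : nat)%:Z.
pose b : 'rV[int]_n := \row_j (s j : nat)%:Z.
have H1 : \det (Vandermonde n b) = (-1) ^+ s * \det (Vandermonde n a).
  have -> : Vandermonde n b = col_perm s (Vandermonde n a).
    by apply/matrixP => i j; rewrite !mxE.
  by rewrite col_permE det_mulmx det_perm odd_permV mulrC.
rewrite !det_Vandermonde in H1.
pose P := \prod_(i < n) \prod_(j < n | (i < j)%N) (a 0 j - a 0 i).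
have Ppos : 0 < P.
  apply: prodr_gt0 => i _; apply: prodr_gt0 => j hij.
  by rewrite !mxE subr_gt0 ltz_nat.
have H3 : \prod_(i < n) \prod_(j < n | (i < j)%N) (b 0 j - b 0 i)
   = (-1) ^+ perm_length s * \prod_(i < n) \prod_(j < n | (i < j)%N) `|b 0 j - b 0 i|.
  rewrite perm_length_sum -prodrXr -big_split /=; apply: eq_bigr => i _.
  rewrite -prodrXr -big_split /=; apply: eq_bigr => j _.
  by rewrite {1}[b 0 j - b 0 i]numEsign !mxE subr_lt0 ltz_nat.
have H4 : \prod_(i < n) \prod_(j < n | (i < j)%N) `|b 0 j - b 0 i| = P.
  under eq_bigr do rewrite -normr_prod.
  rewrite -normr_prod H1 normrM normr_sign mul1r.
  by apply/normr_idP; apply: ltW.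
rewrite H4 in H3; rewrite H3 in H1.
have /eqP : (-1) ^+ perm_length s = (-1) ^+ s :> int.
  by apply: (mulIf (lt0r_neq0 Ppos)).
rewrite -signr_odd -[X in _ == X]signr_odd => /eqP /signr_inj.
by move=> h; rewrite -signr_odd h signr_odd.
Qed.


Section Coef.
Variable R : comNzRingType.

Definition Gp (n : nat) (a b : nat -> R) (k : nat) : {poly R} :=
  \prod_(0 <= m < k) (1 - (a m)%:P * 'X) * \prod_(k <= m < n) (1 + (b m)%:P * 'X).

Definition Cm n a b : 'M[R]_(n.+1) := \matrix_(k, i) (Gp n a b k)`_i.

Lemma Gp_diff n a b k : (k < n.+1)%N ->
  Gp n.+1 a b k.+1 - Gp n.+1 a b k =
  (-(a k + b k))%:P * ('X * Gp n a (fun m => b m.+1) k).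
Proof.
move=> hk; rewrite /Gp big_nat_recr //= (big_ltn hk).
have -> : \prod_(k.+1 <= m < n.+1) (1 + (b m)%:P * 'X) =
   \prod_(k <= m < n) (1 + (b m.+1)%:P * 'X).
  rewrite -addn1 big_addn subn1 /=; apply: eq_bigr => i _; by rewrite addn1.
rewrite polyCN polyCD; ring.
Qed.

Lemma Gp_coef0 n a b k : (Gp n a b k)`_0 = 1.
Proof.
rewrite -horner_coef0 /Gp hornerM !horner_prod.
by rewrite !big1 ?mulr1 // => m _; rewrite !hornerE ?mulr0 ?subr0 ?addr0.
Qed.

Lemma detC n a b : \det (Cm n a b) = \prod_(i < n) \prod_(i <= j < n) (-(a i + b j)).
Proof.
elim: n b => [|n IH] b.
  by rewrite det_mx11 mxE Gp_coef0 big_ord0.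
pose S : 'M[R]_(n.+2) := \matrix_(k, l) ((k == l.+1 :> nat)%:R).
pose E : 'M[R]_(n.+2) := 1%:M - S.
have dE : \det E = 1.
  rewrite det_trig; last first.
    apply/is_trig_mxP => i j hij; rewrite !mxE.
    rewrite (_ : (i == j) = false); last by apply/negbTE; rewrite -val_eqE /= neq_ltn hij.
    by rewrite (ltn_eqF (leq_trans hij (leqnSn _))) subrr.
  apply: big1 => i _; by rewrite !mxE eqxx (ltn_eqF (ltnSn _)) subr0.
set C := Cm n.+1 a b.
have SC0 i : (S *m C) 0 i = 0 by rewrite mxE big1 // => l _; rewrite mxE mul0r.
have SCl k i : (S *m C) (lift 0 k) i = C (widen_ord (leqnSn _) k) i.
  rewrite mxE (bigD1 (widen_ord (leqnSn _) k)) //= big1 ?addr0.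
    by rewrite mxE lift0 eqxx mul1r.
  move=> l hl; rewrite mxE lift0 /=.
  case: eqP => [h|]; last by rewrite mul0r.
  by case/eqP: hl; apply/val_inj => /=; case: h.
have EC0 i : (E *m C) 0 i = C 0 i.
  by rewrite /E mulmxBl mul1mx -[RHS]subr0 -(SC0 i) !mxE.
have ECl k i : (E *m C) (lift 0 k) i = C (lift 0 k) i - C (widen_ord (leqnSn _) k) i.
  by rewrite /E mulmxBl mul1mx -SCl !mxE.
have -> : \det C = \det (E *m C) by rewrite det_mulmx dE mul1r.
rewrite (expand_det_col _ 0) [LHS]big_ord_recl big1 ?addr0; last first.
  move=> k _; rewrite ECl.
  rewrite !mxE lift0 /= -coefB Gp_diff ?ltn_ord // coefCM coefXM /= mulr0.
  by rewrite mul0r.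
rewrite EC0 !mxE Gp_coef0 mul1r.
rewrite /cofactor expr0 mul1r.
have -> : row' 0 (col' 0 (E *m C)) =
   diag_mx (\row_k (-(a k + b k))) *m Cm n a (fun m => b m.+1).
  apply/matrixP => k i; rewrite mul_diag_mx [LHS]mxE [LHS]mxE ECl !mxE.
  rewrite !lift0 /= -coefB Gp_diff ?ltn_ord // coefCM coefXM /=.
  done.
rewrite det_mulmx det_diag IH.
under eq_bigr do rewrite mxE.
rewrite [RHS](eq_bigr (fun i : 'I_n.+1 => -(a i + b i) * \prod_(i.+1 <= j < n.+1) -(a i + b j))); last first.
  by move=> i _; rewrite big_ltn // ltn_ord.
rewrite big_split /=; congr (_ * _).
rewrite big_ord_recr /= big_geq // mulr1.
apply: eq_bigr => i _; rewrite -[(i : nat).+1]addn1 big_addn subn1 /=.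
by apply: eq_bigr => j _; rewrite addn1.
Qed.

End Coef.


Arguments Gp {R} n a b k.
Arguments Cm {R} n a b.

Section Main.
Variable R : comNzRingType.

Lemma size_prod2 (r : seq nat) (F : nat -> {poly R}) :
  (forall i, (size (F i) <= 2)%N) -> (size (\prod_(i <- r) F i)%R <= (size r).+1)%N.
Proof.
elim: r => [|i r IH] hF; first by rewrite big_nil size_poly1.
rewrite big_cons; apply: leq_trans (size_mul_leq _ _) _.
have := hF i; have := IH hF => /=; lia.
Qed.

Lemma size_lin (c : R) : (size (c%:P * 'X + 1%:P)%R <= 2)%N.
Proof. by rewrite size_MXaddC; case: ifP => // _; rewrite ltnS size_polyC_leq1. Qed.

Lemma size_Gp n (a b : nat -> R) k : (k <= n)%N -> (size (Gp n a b k) <= n.+1)%N.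
Proof.
move=> hk; rewrite /Gp; apply: leq_trans (size_mul_leq _ _) _.
have h1 := @size_prod2 (index_iota 0 k) (fun m => 1 - (a m)%:P * 'X).
have h2 := @size_prod2 (index_iota k n) (fun m => 1 + (b m)%:P * 'X).
rewrite !size_iota in h1 h2.
have : (size (\prod_(0 <= m < k) (1 - (a m)%:P * 'X))%R <= (k - 0).+1)%N.
  apply: h1 => i; rewrite addrC -mulNr -polyCN -polyC1; exact: size_lin.
have : (size (\prod_(k <= m < n) (1 + (b m)%:P * 'X))%R <= (n - k).+1)%N.
  apply: h2 => i; rewrite addrC -polyC1; exact: size_lin.
move=> A B; rewrite subn0 in B; rewrite -subn1 leq_subLR; apply: leq_trans (leq_add B A) _; lia.
Qed.

Lemma prod_swap p (x t w : nat -> R) :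
  \prod_(1 <= m < p.+1) (\prod_(1 <= k < m.+1) (1 + t m * w k * x m) *
        \prod_(m.+1 <= k < p.+2) (1 - w k * x m))
  = \prod_(k < p.+1) (Gp p (fun m => x m.+1) (fun m => t m.+1 * x m.+1) k).[w k.+1].
Proof.
have step1 m : (1 <= m < p.+1)%N ->
  \prod_(1 <= k < m.+1) (1 + t m * w k * x m) *
        \prod_(m.+1 <= k < p.+2) (1 - w k * x m) =
  \prod_(1 <= k < p.+2) (if (k <= m)%N then 1 + t m * w k * x m else 1 - w k * x m).
  move=> /andP[h1 h2]; rewrite [RHS](big_cat_nat (n:=m.+1)) //=; last by lia.
  congr (_ * _); apply: eq_big_nat => k /andP[hk1 hk2].
    by rewrite -ltnS hk2.
  by rewrite leqNgt hk1.
rewrite (eq_big_nat _ _ step1) exchange_big_nat big_add1 /= big_mkord.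
apply: eq_bigr => k _; rewrite big_add1 /=.
rewrite /Gp hornerM !horner_prod.
have hk : (k <= p)%N by rewrite -ltnS ltn_ord.
rewrite (big_cat_nat (n:=k)) //=.
congr (_ * _); apply: eq_big_nat => m /andP[hm1 hm2].
  rewrite ltnS leqNgt hm2 /= !hornerE; ring.
rewrite ltnS hm1 /= !hornerE; ring.
Qed.



Lemma perm_nat_S n (s : 'S_n) (k : 'I_n) : perm_nat s (val k).+1 = (val (s k)).+1.
Proof.
rewrite /perm_nat; case: insubP => [i _ hi|]; last by rewrite /= ltn_ord.
by have -> : i = k by apply: val_inj.
Qed.

Lemma E12 q : (\prod_(i < q) \prod_(i <= j < q) (-1 : R)) *
   (\prod_(i < q.+1) \prod_(i.+1 <= j < q.+1) (-1 : R)) = 1.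
Proof.
rewrite big_ord_recr /= big_geq // mulr1.
have -> : \prod_(i < q) \prod_(i.+1 <= j < q.+1) (-1 : R) =
          \prod_(i < q) \prod_(i <= j < q) (-1 : R).
  by apply: eq_bigr => i _; rewrite big_add1.
rewrite -big_split big1 // => i _; rewrite -big_split big1 // => j _.
by rewrite /= mulrNN mulr1.
Qed.

Lemma algX q (x t : nat -> R) :
  \prod_(i < q) \prod_(i <= j < q) (-(x i.+1 + t j.+1 * x j.+1)) =
  (\prod_(i < q) \prod_(i <= j < q) (-1 : R)) *
  ((\prod_(1 <= i < q.+1) x i) * (\prod_(1 <= i < q.+1) (1 + t i)) *
    (\prod_(1 <= i < q.+1) \prod_(i.+1 <= j < q.+1) (x i + t j * x j))).
Proof.
have -> : \prod_(i < q) \prod_(i <= j < q) (-(x i.+1 + t j.+1 * x j.+1)) =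
  (\prod_(i < q) \prod_(i <= j < q) (-1 : R)) *
  \prod_(i < q) \prod_(i <= j < q) (x i.+1 + t j.+1 * x j.+1).
  rewrite -big_split; apply: eq_bigr => i _; rewrite -big_split.
  by apply: eq_bigr => j _; rewrite /= mulN1r.
congr (_ * _).
rewrite !big_add1 /= !big_mkord -big_split /= -big_split /=.
apply: eq_bigr => i _; rewrite big_ltn ?ltn_ord // [X in _ = _ * X]big_add1 /=.
by congr (_ * _); ring.
Qed.

Lemma algZ q (z : nat -> R) :
  \prod_(i < q.+1) \prod_(j < q.+1 | (i < j)%N) (z (j : nat).+1 - z (i : nat).+1) =
  (\prod_(i < q.+1) \prod_(i.+1 <= j < q.+1) (-1 : R)) *
  \prod_(1 <= i < q.+2) \prod_(i.+1 <= j < q.+2) (z i - z j).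
Proof.
rewrite big_add1 /= big_mkord -big_split /=; apply: eq_bigr => i _.
rewrite [X in _ = _ * X]big_add1 /= -big_split /= big_geq_mkord.
apply: eq_big => [j|j _]; first by rewrite andTb.
by rewrite mulN1r opprB.
Qed.

End Main.

Theorem mainTheorem8 (R : comNzRingType) (n : nat) (hn : (2 <= n)%N)
    (x t z : nat -> R) :
  \sum_(s : 'S_n) (-1) ^+ perm_length s *
     \prod_(1 <= m < n)
        ((\prod_(1 <= k < m.+1) (1 + t m * z (perm_nat s k) * x m)) *
         (\prod_(m.+1 <= k < n.+1) (1 - z (perm_nat s k) * x m)))
  = (\prod_(1 <= i < n) x i) * (\prod_(1 <= i < n) (1 + t i)) *
    (\prod_(1 <= i < n) \prod_(i.+1 <= j < n) (x i + t j * x j)) *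
    (\prod_(1 <= i < n.+1) \prod_(i.+1 <= j < n.+1) (z i - z j)).
Proof.
case: n hn => [|q] // _.
set a := fun m => x m.+1.
set b := fun m => t m.+1 * x m.+1.
have -> : \sum_(s : 'S_q.+1) (-1) ^+ perm_length s *
     \prod_(1 <= m < q.+1)
        ((\prod_(1 <= k < m.+1) (1 + t m * z (perm_nat s k) * x m)) *
         (\prod_(m.+1 <= k < q.+2) (1 - z (perm_nat s k) * x m)))
   = \det (\matrix_(k < q.+1, j < q.+1) (Gp q a b k).[z (j : nat).+1]).
  rewrite /determinant; apply: eq_bigr => s _; rewrite sign_len.
  congr (_ * _); rewrite (@prod_swap R q x t (fun k => z (perm_nat s k))).
  by apply: eq_bigr => k _; rewrite perm_nat_S mxE.
have -> : (\matrix_(k < q.+1, j < q.+1) (Gp q a b k).[z (j : nat).+1])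
   = Cm q a b *m Vandermonde q.+1 (\row_(j < q.+1) z (j : nat).+1).
  apply/matrixP => k j; have hs : (size (Gp q a b k) <= q.+1)%N by apply: size_Gp; rewrite -ltnS ltn_ord.
  rewrite !mxE (horner_coef_wide _ hs).
  by apply: eq_bigr => i _; rewrite !mxE.
rewrite det_mulmx detC det_Vandermonde.
under [X in _ * X]eq_bigr do under eq_bigr do rewrite !mxE.
rewrite algZ (@algX R q x t).
set E1 := \prod_(i < q) _.
set E2 := \prod_(i < q.+1) _.
set A := _ * _ * _.
set Z := \prod_(1 <= i < q.+2) _.
have -> : E1 * A * (E2 * Z) = (E1 * E2) * (A * Z) by ring.
by rewrite E12 mul1r.
Qed.
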